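(* Let $n=25$. The only effective divisor classes $D$ on $X$ with $\chi(D)\ge2$ and $2B\cdot D<B\cdot K$ are the classes $H-E_i$, $1\le i\le 25$.
   Context: Let $X$ be the blowup of $\mathbb{P}^2_{\mathbb{C}}$ at $n$ very general points, with $H$ the pullback of a line class, $E_i$ the exceptional divisors, $E=\sum_iE_i$, and $K=K_X=-3H+E$; $B=\sqrt nH-E$ (so $B=5H-E$ for $n=25$). Write $\chi(D)=\chi(\mathcal{O}_X(D))$; effective means the class of an effective divisor. *)

(* Defs.v *)
From mathcomp Require Import all_boot all_algebra.
From mathcomp Require Import Rstruct complex.
From mathcomp Require Import mpoly.

Set Implicit Arguments.
Unset Strict Implicit.
Unset Printing Implicit Defensive.

Import GRing.Theory Num.Theory.
Local Open Scope ring_scope.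

Definition CC : Type := (Rdefinitions.R)[i].

(* A configuration of n points of P^2(C): an n x 3 matrix whose rows are
   homogeneous coordinates.  The points are honest, pairwise distinct points
   of P^2 iff any two distinct rows are linearly independent (this also forces
   every row to be nonzero). *)
Definition distinct_points (n : nat) (M : 'M[CC]_(n, 3)) : Prop :=
  forall i j : 'I_n, i != j -> \rank (col_mx (row i M) (row j M)) = 2%N.

(* The coordinates of all points flattened into one vector of length n*3,
   used to evaluate polynomials on the configuration space (C^3)^n. *)
Definition config_coords (n : nat) (M : 'M[CC]_(n, 3)) : 'I_(n * 3) -> CC :=
  fun k => mxvec M 0 k.

Definition mult_ge (F : {mpoly CC[3]}) (v : 'I_3 -> CC) (k : nat) : Prop :=
  forall a : 'X_{1..3}, (mdeg a < k)%N -> (F^`M[a]).@[v] = 0.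

(* A divisor class on the blowup X of P^2 at n points, written in the basis
   H, E_1, ..., E_n of Pic X:  D = (d, m)  means  D = d H - sum_i m_i E_i. *)
Definition divclass (n : nat) : Type := (int * {ffun 'I_n -> int})%type.

(* Intersection form: H^2 = 1, E_i.E_j = -delta_ij, H.E_i = 0. *)
Definition idot (n : nat) (D1 D2 : divclass n) : int :=
  D1.1 * D2.1 - \sum_(i < n) D1.2 i * D2.2 i.

Definition Kcl (n : nat) : divclass n := (-3, [ffun => -1]).

(* B = sqrt(n) H - E; for n = 25 this is 5H - E. *)
Definition B25 : divclass 25 := (5, [ffun => 1]).

Definition HmE (n : nat) (i : 'I_n) : divclass n :=
  (1, [ffun j => if j == i then 1 else 0]).

(* chi(O_X(D)) computed by Riemann--Roch on the rational surface X
   (chi(O_X) = 1):  chi(D) = 1 + (D^2 - D.K)/2. *)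
Definition chi (n : nat) (D : divclass n) : rat :=
  1 + (idot D D - idot D (Kcl n))%:~R / 2.

(* D = dH - sum m_i E_i is the class of an effective divisor on the blowup
   of P^2 at the points (rows of) M iff there is a plane curve of degree d
   (a nonzero form of degree d) having multiplicity >= max(m_i, 0) at the
   i-th point (the rest being a nonnegative combination of the E_i). *)
Definition effective (n : nat) (M : 'M[CC]_(n, 3)) (D : divclass n) : Prop :=
  (0 <= D.1) /\
  exists F : {mpoly CC[3]},
    [/\ F != 0, F \is (absz D.1).-homog &
        forall i : 'I_n, mult_ge F (fun k => M i k) (absz (Num.max (D.2 i) 0))].

(* Main.v *)
Require Import Defs.
From mathcomp Require Import all_boot all_algebra.
From mathcomp Require Import Rstruct complex.
From mathcomp Require Import mpoly.
From mathcomp Require Import ring lra zify.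

Local Open Scope ring_scope.
Import GRing.Theory Num.Theory.

Lemma cs25 (m : 'I_25 -> int) :
  (\sum_i m i) * (\sum_i m i) <= 25 * \sum_i m i * m i.
Proof.
set s := \sum_i m i; set q := \sum_i m i * m i.
have E : \sum_(i < 25) (25 * m i - s) * (25 * m i - s) = 625 * q - 25 * s * s.
  rewrite (eq_bigr (fun i => 625 * (m i * m i) - 50 * s * m i + s * s)); last by move=> i _; ring.
  rewrite big_split sumrB /= -!mulr_sumr sumr_const card_ord /q /s -/s; ring.
have : 0 <= \sum_(i < 25) (25 * m i - s) * (25 * m i - s).
  by apply: sumr_ge0 => i _; rewrite -expr2 sqr_ge0.
rewrite E; lia.
Qed.

Lemma numeric (d : int) (m : 'I_25 -> int) :
 0 <= d -> 2 <= d*d + 3*d - \sum_i m i * m i - \sum_i m i -> 5*d - 4 <= \sum_i m i ->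
 d = 1 /\ \sum_i m i = 1 /\ \sum_i m i * m i = 1.
Proof.
move=> h0 h1 h2.
have cs := cs25 m.
have pos : \sum_i m i <= \sum_i m i * m i.
  rewrite -subr_ge0 -sumrB; apply: sumr_ge0 => i _.
  have : (m i <= 0) \/ (1 <= m i) by lia.
  case=> h; nia.
have qpos : 0 <= \sum_i m i * m i by apply: sumr_ge0 => i _; nia.
have pos2 : - \sum_i m i <= \sum_i m i * m i.
  rewrite -subr_ge0 opprK -big_split; apply: sumr_ge0 => i _ /=.
  have : (m i <= -1) \/ (0 <= m i) by lia.
  case=> h; nia.
set s := \sum_i m i in h1 h2 cs pos pos2 *; set q := \sum_i m i * m i in h1 cs pos qpos pos2 *.
have d3 : d <= 3 by nia.
have hd : (d = 0) \/ (d = 1) \/ (d = 2) \/ (d = 3) by lia.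
case: hd => [hd|[hd|[hd|hd]]]; rewrite hd in h1 h2 *; lia.
Qed.

Lemma onehot (m : {ffun 'I_25 -> int}) :
  \sum_i m i = 1 -> \sum_i m i * m i = 1 ->
  exists i, m = [ffun j => if j == i then 1 else 0].
Proof.
move=> hs hq.
have h0 : forall i, m i * m i - m i = 0.
  move=> i; apply: (@psumr_eq0P _ _ xpredT (fun i => m i * m i - m i)) => //.
    move=> k _; have : (m k <= 0) \/ (1 <= m k) by lia.
    by case=> h; nia.
  by rewrite sumrB hs hq subrr.
have h01 : forall i, (m i = 0) \/ (m i = 1).
  move=> i; have := h0 i; have : (m i <= 0) \/ (1 <= m i) by lia.
  case=> h; nia.
case: (pickP (fun i => m i == 1)) => [i /eqP hi | hn]; last first.
  move: hs; rewrite big1 // => j _; have := hn j; case: (h01 j) => -> //=.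
exists i; apply/ffunP => j; rewrite ffunE.
case: eqP => [->//|/eqP hji].
have hr : \sum_(j | j != i) m j = 0.
  move: hs; rewrite (bigD1 i) //= hi => /eqP; rewrite -subr_eq0 addrAC subrr add0r => /eqP; exact.
apply: (psumr_eq0P (P := fun j => j != i)) hr j hji.
by move=> k _; case: (h01 k) => ->.
Qed.

Lemma idotB (d : int) (m : {ffun 'I_25 -> int}) :
  idot B25 (d, m) = 5 * d - \sum_i m i.
Proof. by rewrite /idot /B25 /=; congr (_ - _); apply: eq_bigr => i _; rewrite ffunE mul1r. Qed.

Lemma idotBK : idot B25 (Kcl 25) = 10.
Proof.
rewrite /idot /B25 /Kcl /= (eq_bigr (fun _ => -1)); last by move=> i _; rewrite !ffunE mul1r.
by rewrite sumr_const card_ord.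
Qed.

Lemma idotDK (d : int) (m : {ffun 'I_25 -> int}) :
  idot (d, m) (Kcl 25) = d * (-3) + \sum_i m i.
Proof.
rewrite /idot /Kcl /= (eq_bigr (fun i => - m i)); last by move=> i _; rewrite !ffunE mulrN1.
by rewrite sumrN opprK.
Qed.

Lemma chi_ge2 (x : int) : (2%:Q <= 1 + x%:~R / 2) -> 2 <= x.
Proof.
move=> h; have : (2%:~R : rat) <= x%:~R by lra.
by rewrite ler_int.
Qed.

Lemma chi_HmE (i : 'I_25) : chi (HmE i) = 2%:Q.
Proof.
have e1 : \sum_(j < 25) (HmE i).2 j * (HmE i).2 j = 1.
  rewrite (bigD1 i) //= big1 ?ffunE ?eqxx // => j hj.
  by rewrite ffunE (negbTE hj) mul0r.
have e2 : \sum_(j < 25) (HmE i).2 j * (Kcl 25).2 j = -1.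
  rewrite (bigD1 i) //= big1 ?ffunE ?eqxx // => j hj.
  by rewrite !ffunE (negbTE hj) mul0r.
rewrite /chi /idot e1 e2 /=.
by [].
Qed.

Lemma idotB_HmE (i : 'I_25) : idot B25 (HmE i) = 4.
Proof.
rewrite /HmE idotB (bigD1 i) //= big1 ?ffunE ?eqxx // => j hj.
by rewrite ffunE (negbTE hj).
Qed.

Definition i0 : 'I_3 := @Ordinal 3 0 isT.
Definition i1 : 'I_3 := @Ordinal 3 1 isT.

Lemma line_through (v : 'I_3 -> CC) :
  exists F : {mpoly CC[3]}, [/\ F != 0, F \is 1.-homog & F.@[v] = 0].
Proof.
have hX : forall k : 'I_3, ('X_k : {mpoly CC[3]}) \is 1.-homog.
  by move=> k; rewrite dhomogX /= mdeg1.
case: (eqVneq (v i0) 0) => h0.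
  exists 'X_i0; split => //; last by rewrite mevalXU.
  apply/eqP => h; have := congr1 (mcoeff U_(i0)) h.
  by rewrite mcoeffXU mcoeff0 eqxx => /eqP; rewrite oner_eq0.
exists (v i1 *: 'X_i0 - v i0 *: 'X_i1); split.
- apply/eqP => h; have := congr1 (mcoeff U_(i1)) h.
  rewrite mcoeff0 mcoeffB !mcoeffZ !mcoeffXU /= mulr0 mulr1 sub0r => /eqP.
  by rewrite oppr_eq0 (negbTE h0).
- by rewrite rpredB // rpredZ.
- by rewrite mevalB !mevalZ !mevalXU mulrC subrr.
Qed.

Lemma effective_HmE (M : 'M[CC]_(25, 3)) (i : 'I_25) : effective M (HmE i).
Proof.
split => //.
have [F [hF hh hv]] := line_through (fun k => M i k).
exists F; split => // j a.
rewrite /HmE /= ffunE.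
case: eqP => [->|_] /=; last by [].
move=> ha; have : a = 0%MM by apply/eqP; rewrite -mdeg_eq0; move: ha; case: (mdeg a).
by move=> ->; rewrite mderivm0m.
Qed.

Theorem theorem4p15 :
  exists G : nat -> {mpoly CC[25 * 3]},
    (forall k, G k != 0) /\
    forall M : 'M[CC]_(25, 3),
      distinct_points M ->
      (forall k, (G k).@[config_coords M] != 0) ->
      forall D : divclass 25,
        (effective M D /\ 2%:Q <= chi D /\ 2 * idot B25 D < idot B25 (Kcl 25))
        <-> exists i : 'I_25, D = HmE i.
Proof.
exists (fun _ => 1); split; first by move=> k; exact: oner_neq0.
move=> M _ _ [d m]; split.
- case=> [[hd _] [hchi hB]].
  rewrite idotB idotBK in hB.
  move: hchi; rewrite /chi idotDK => /chi_ge2 hchi.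
  have eD : idot (d, m) (d, m) = d * d - \sum_i m i * m i by [].
  rewrite eD in hchi.
  have [d1 [hs hq]] := @numeric d m hd
     (ltac:(lia) : 2 <= d*d + 3*d - \sum_i m i * m i - \sum_i m i)
     (ltac:(lia) : 5*d - 4 <= \sum_i m i).
  have [i hi] := @onehot m hs hq.
  by exists i; rewrite /HmE d1 hi.
- case=> i ->; split; first exact: effective_HmE.
  by rewrite chi_HmE idotB_HmE idotBK.
Qed.
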